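(* Let $X$ be a finite set and $\mathcal{F}$ a symmetric clone on $X$ with $r(\mathcal{F})=3$. Let $f^*\in\mathcal{F}_{[3]}$ be not a monarchy and let $\bar a\in X^3$ be without repetition such that $f^*(\bar a')=a'_1$ for every permutation $\bar a'=(a'_1,a'_2,a'_3)$ of $\bar a$, but it is not the case that $f^*(\bar b)=b_1$ for all $\bar b\in X^3$ that are not one-to-one. Then there is $g\in\mathcal{F}_{[3]}$ satisfying (a) or (b): (a) $g(\bar b)=b_1$ for every $\bar b\in X^3$ with a repetition, and $g(\bar a')=a'_2$ for every permutation $\bar a'$ of $\bar a$; (b) $g(\bar b)=g_{3;1,2}(\bar b)$ for every $\bar b\in X^3$ with a repetition, and $g(\bar a')=a'_1$ for every permutation $\bar a'$ of $\bar a$.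
   Context: A clone on $X$: set of finitary operations on $X$ containing all projections and closed under composition; $\mathcal{F}_{[r]}$ its $r$-place members. Symmetric: for $f\in\mathcal{F}_{[n]}$ and a permutation $\pi$ of $X$, $\bar x\mapsto\pi^{-1}(f(\pi x_1,\dots,\pi x_n))$ is in $\mathcal{F}$. A monarchy is a projection. $r(\mathcal{F})=\min\{r:\text{some } f\in\mathcal{F}_{[r]} \text{ is not a monarchy}\}$. $g_{3;1,2}(x_1,x_2,x_3)=x_2$ if $x_2=x_3$, and $x_1$ otherwise. *)

(* Defs.v *)
From mathcomp Require Import all_boot all_fingroup.
Set Implicit Arguments. Unset Strict Implicit. Unset Printing Implicit Defensive.

(* An n-place operation on X: a map X^n -> X, with X^n = ('I_n -> X).
   Coordinates are indexed 0..n-1 (paper's x_1 is index 0). *)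
Definition op (X : Type) (n : nat) := ('I_n -> X) -> X.

Definition opset (X : Type) := forall n : nat, op X n -> Prop.

Definition proj (X : Type) (n : nat) (i : 'I_n) : op X n := fun x => x i.

Definition is_monarchy (X : Type) (n : nat) (f : op X n) : Prop :=
  exists i : 'I_n, forall x, f x = x i.

Definition compose (X : Type) (n m : nat) (f : op X n) (g : 'I_n -> op X m) : op X m :=
  fun x => f (fun i => g i x).

Definition is_clone (X : Type) (F : opset X) : Prop :=
  (forall n (i : 'I_n), F n (proj i)) /\
  (forall n m (f : op X n) (g : 'I_n -> op X m),
      F n f -> (forall i, F m (g i)) -> F m (compose f g)).

Definition is_symmetric (X : finType) (F : opset X) : Prop :=
  forall n (f : op X n) (pi : {perm X}),
    F n f -> F n (fun x => (pi^-1)%g (f (fun i => pi (x i)))).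

Definition r_is (X : Type) (F : opset X) (r : nat) : Prop :=
  (exists f : op X r, F r f /\ ~ is_monarchy f) /\
  (forall k, k < r -> forall f : op X k, F k f -> is_monarchy f).

Definition i1 : 'I_3 := @Ordinal 3 0 erefl.
Definition i2 : 'I_3 := @Ordinal 3 1 erefl.
Definition i3 : 'I_3 := @Ordinal 3 2 erefl.

Definition g312 (X : eqType) : op X 3 :=
  fun x => if x i2 == x i3 then x i2 else x i1.

(* Main.v *)
Require Import Defs.
From mathcomp Require Import all_boot all_fingroup.
From Stdlib Require Import FunctionalExtensionality.
Set Implicit Arguments. Unset Strict Implicit. Unset Printing Implicit Defensive.

Ltac fin := rewrite ?permM !permE /=; split; [|split]; apply: val_inj => //.
Lemma pex (i j k : 'I_3) : i != j -> i != k -> j != k ->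
  exists s : 'S_3, s i1 = i /\ s i2 = j /\ s i3 = k.
Proof.
move: i j k; do 3 case=> [[|[|[|?]]] ?] //=; move=> *.
all: first [ exists 1%g; by fin | exists (tperm i1 i2); by fin | exists (tperm i1 i3); by fin | exists (tperm i2 i3); by fin
   | exists (tperm i1 i2 * tperm i1 i3)%g; by fin | exists (tperm i1 i3 * tperm i1 i2)%g; by fin ].
Qed.

Definition t3 (T : Type) (x y z : T) : 'I_3 -> T :=
  fun i => match nat_of_ord i with 0 => x | 1 => y | _ => z end.
Arguments t3 : simpl never.
Lemma t3_1 T (x y z : T) : t3 x y z i1 = x. Proof. by []. Qed.
Lemma t3_2 T (x y z : T) : t3 x y z i2 = y. Proof. by []. Qed.
Lemma t3_3 T (x y z : T) : t3 x y z i3 = z. Proof. by []. Qed.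

Lemma t3_eta T (b : 'I_3 -> T) : b = t3 (b i1) (b i2) (b i3).
Proof.
apply: functional_extensionality => -[[|[|[|?]]] H] //; rewrite /t3 /=;
  congr b; exact: val_inj.
Qed.

Lemma clone3 (X : Type) (F : opset X) (hc : is_clone F) n (f : op X 3)
  (h1 h2 h3 : op X n) : F 3 f -> F n h1 -> F n h2 -> F n h3 ->
  F n (fun x => f (t3 (h1 x) (h2 x) (h3 x))).
Proof.
move=> Hf H1 H2 H3.
have -> : (fun x => f (t3 (h1 x) (h2 x) (h3 x))) = compose f (t3 h1 h2 h3).
  apply: functional_extensionality => x; rewrite /compose; congr f.
  by apply: functional_extensionality => -[[|[|[|?]]] H].
apply: hc.2 => //; by case=> [[|[|[|?]]] H].
Qed.

Lemma projF (X : Type) (F : opset X) (hc : is_clone F) n (i : 'I_n) :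
  F n (fun x => x i).
Proof. exact: hc.1. Qed.

Lemma rep_cases (X : eqType) (b : 'I_3 -> X) : ~ injective b ->
  exists x y, b = t3 x x y \/ b = t3 x y x \/ b = t3 y x x.
Proof.
move=> nb; rewrite (t3_eta b).
case: (b i1 =P b i2) => [->|n12]; first by exists (b i2), (b i3); left.
case: (b i1 =P b i3) => [->|n13]; first by exists (b i3), (b i2); right; left.
case: (b i2 =P b i3) => [->|n23]; first by exists (b i3), (b i1); right; right.
have Hord : forall u : 'I_3, u = i1 \/ u = i2 \/ u = i3.
  by move=> -[[|[|[|?]]] H] //; [left|right;left|right;right]; apply: val_inj.
exfalso; apply: nb => u v.
case: (Hord u) => [->|[->|->]]; case: (Hord v) => [->|[->|->]] // E.
all: exfalso; first [exact: n12 E| exact: n13 E| exact: n23 E | exact: n12 (esym E)| exact: n13 (esym E)| exact: n23 (esym E)].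
Qed.

Definition t2 (T : Type) (x y : T) (c : 'I_2) : T := if nat_of_ord c == 0 then x else y.

Lemma bintype (X : Type) (F : opset X) (hc : is_clone F)
  (hr : forall f : op X 2, F 2 f -> is_monarchy f)
  (f : op X 3) (hf : F 3 f) (c1 c2 c3 : 'I_2) :
  (forall x y, f (t3 (t2 x y c1) (t2 x y c2) (t2 x y c3)) = x) \/
  (forall x y, f (t3 (t2 x y c1) (t2 x y c2) (t2 x y c3)) = y).
Proof.
have := hr _ (clone3 hc hf (projF hc c1) (projF hc c2) (projF hc c3)).
case=> -[[|[|?]] Hj] // E; [left|right] => x y.
- have := E (t2 x y).
  have -> : t2 x y = fun c => t2 x y c by [].
  move=> ->; by [].
- by have := E (t2 x y) => ->.
Qed.

Set Bullet Behavior "Strict Subproofs".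
Theorem claim2 (X : finType) (F : opset X)
  (hclone : is_clone F) (hsym : is_symmetric F) (hr : r_is F 3)
  (fs : op X 3) (hfs : F 3 fs) (hfsnm : ~ is_monarchy fs)
  (a : 'I_3 -> X) (ha : injective a)
  (hperm : forall s : 'S_3, fs (fun i => a (s i)) = a (s i1))
  (hnot : ~ (forall b : 'I_3 -> X, ~ injective b -> fs b = b i1)) :
  exists g : op X 3, F 3 g /\
    ( ((forall b : 'I_3 -> X, ~ injective b -> g b = b i1) /\
       (forall s : 'S_3, g (fun i => a (s i)) = a (s i2)))
    \/
      ((forall b : 'I_3 -> X, ~ injective b -> g b = g312 b) /\
       (forall s : 'S_3, g (fun i => a (s i)) = a (s i1)))).
Proof.
have hr2 : forall f : op X 2, F 2 f -> is_monarchy f := fun f => hr.2 2 erefl f.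
have P : forall i j k, i != j -> i != k -> j != k -> fs (t3 (a i) (a j) (a k)) = a i.
  move=> i j k H1 H2 H3; case: (pex H1 H2 H3) => s [e1 [e2 e3]].
  by rewrite -e1 -e2 -e3 -[in RHS]hperm [in RHS](t3_eta (fun c => a (s c))).
pose o0 := @Ordinal 2 0 erefl; pose o1 := @Ordinal 2 1 erefl.
case: (bintype hclone hr2 hfs o0 o0 o1) => R1;
case: (bintype hclone hr2 hfs o0 o1 o0) => R2;
case: (bintype hclone hr2 hfs o1 o0 o0) => R3;
rewrite /t2 /= in R1 R2 R3.
Ltac evrep R1 R2 R3 := rewrite ?t3_1 ?t3_2 ?t3_3; repeat first [rewrite R1 | rewrite R2 | rewrite R3].
Ltac evp R1 R2 R3 P := rewrite ?t3_1 ?t3_2 ?t3_3; repeat first [rewrite R1 | rewrite R2 | rewrite R3 | (rewrite P; try by rewrite (inj_eq perm_inj))].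
Ltac mem hc hf := repeat first [apply: (clone3 hc hf) | apply: (projF hc)].
Ltac finish R1 R2 R3 P := split; [ move=> b /rep_cases [x [y [->|[->|->]]]]; rewrite /g312 /=; evrep R1 R2 R3; rewrite ?t3_1 ?t3_2 ?t3_3; try (case: eqP => //)
   | move=> s /=; evp R1 R2 R3 P ]; done.
-
  exists (fun x => fs (t3 (x i1) (x i2) (x i3))); split; first by mem hclone hfs.
  right; finish R1 R2 R3 P.
- (* R1=x R2=x R3=y : proj1 *)
  exfalso; apply: hnot => b /rep_cases [x [y [->|[->|->]]]]; rewrite ?R1 ?R2 ?R3 ?t3_1 //.
-
  exists (fun x => fs (t3 (x i2) (x i1) (x i3))); split; first by mem hclone hfs.
  left; finish R1 R2 R3 P.
-
  exists (fun x => fs (t3 (fs (t3 (x i1) (x i2) (x i3)))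
                          (fs (t3 (x i1) (x i2) (fs (t3 (x i1) (x i2) (x i3)))))
                          (fs (t3 (x i2) (fs (t3 (x i1) (x i2) (x i3))) (x i3)))));
  split; first by mem hclone hfs.
  right; finish R1 R2 R3 P.
-
  exists (fun x => fs (t3 (x i2) (x i3) (x i1))); split; first by mem hclone hfs.
  left; finish R1 R2 R3 P.
-
  exists (fun x => fs (t3 (fs (t3 (x i1) (x i2) (x i3)))
                          (fs (t3 (x i3) (x i2) (fs (t3 (x i1) (x i2) (x i3)))))
                          (fs (t3 (x i1) (fs (t3 (x i1) (x i2) (x i3))) (x i3)))));
  split; first by mem hclone hfs.
  right; finish R1 R2 R3 P.
-
  exists (fun x => fs (t3 (fs (t3 (x i1) (x i2) (x i3))) (x i2) (x i3))); split; first by mem hclone hfs.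
  right; finish R1 R2 R3 P.
-
  exists (fun x => fs (t3 (x i2) (fs (t3 (x i1) (x i2) (x i3))) (x i3))); split; first by mem hclone hfs.
  left; finish R1 R2 R3 P.
Qed.
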